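(* Let $U\subset\mathbb{R}^u\times\mathbb{R}^s$ be a convex neighborhood of zero and let $f:U\to\mathbb{R}^u\times\mathbb{R}^s$ be a $C^1$ map with $f(0)=0$. Suppose that for $M>0$, $m\left(\left[\frac{\partial f_{\mathrm x}}{\partial\mathrm x}(U)\right]\right)-\frac1M\sup_{z\in U}\left\|\frac{\partial f_{\mathrm x}}{\partial\mathrm y}(z)\right\|\ge\xi$, $\sup_{z\in U}\left\{\left\|\frac{\partial f_{\mathrm y}}{\partial\mathrm y}(z)\right\|+M\left\|\frac{\partial f_{\mathrm y}}{\partial\mathrm x}(z)\right\|\right\}\le\mu$, and $\xi/\mu>1$. Let $J_s(0,M)=\{(\mathrm x,\mathrm y):\|\mathrm x\|\le M\|\mathrm y\|\}$ and $J^c_s(0,M)=(\mathbb{R}^u\times\mathbb{R}^s)\setminus J_s(0,M)$. Then $f\left(\overline{J^c_s(0,M)}\cap U\right)\subset J^c_s(0,M)\cup\{0\}$.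
   Context: Points of $\mathbb{R}^u\times\mathbb{R}^s$ are written $(\mathrm x,\mathrm y)$, $f=(f_{\mathrm x},f_{\mathrm y})$, norms Euclidean. For a linear map $A$, $m(A)=\max\{c:\|Av\|\ge c\|v\|\ \forall v\}$; for a set $\mathbf A$ of matrices, $m(\mathbf A)=\inf_{A\in\mathbf A}m(A)$. $[\partial f_{\mathrm x}/\partial\mathrm x(U)]$ is the set of matrices whose $(i,j)$ entry lies in $[\inf_{U}\partial f_{\mathrm x,i}/\partial\mathrm x_j,\sup_U\partial f_{\mathrm x,i}/\partial\mathrm x_j]$. $\overline{A}$ denotes closure. *)

(* Defs.v *)
From HB Require Import structures.
From mathcomp Require Import all_boot all_order all_algebra.
From mathcomp Require Import all_classical all_reals all_analysis.
Set Implicit Arguments. Unset Strict Implicit. Unset Printing Implicit Defensive.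
Import Order.TTheory GRing.Theory Num.Theory.
Import numFieldNormedType.Exports.
Local Open Scope classical_set_scope.
Local Open Scope ring_scope.

Section Defs.
Variable R : realType.

Definition enorm n (v : 'cV[R]_n) : R := Num.sqrt (\sum_i v i 0 ^+ 2).

Definition opnorm p q (A : 'M[R]_(p, q)) : R :=
  sup [set enorm (A *m v) | v in [set v : 'cV[R]_q | enorm v <= 1]].

(* m(A) = max { c : ||A v|| >= c ||v|| for all v } (extended real; +oo in
   the degenerate case of a zero-dimensional domain) *)
Definition m_mx p q (A : 'M[R]_(p, q)) : \bar R :=
  ereal_sup [set c%:E | c in [set c : R | forall v : 'cV[R]_q,
                                          c * enorm v <= enorm (A *m v)]].

Definition m_set p q (S : set 'M[R]_(p, q)) : \bar R :=
  ereal_inf [set m_mx A | A in S].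

Definition interval_hull T p q (D : T -> 'M[R]_(p, q)) (U : set T)
  : set 'M[R]_(p, q) :=
  [set A | forall i j,
     (ereal_inf [set (D z i j)%:E | z in U] <= (A i j)%:E)%E /\
     ((A i j)%:E <= ereal_sup [set (D z i j)%:E | z in U])%E].

Definition convex_set_ (V : lmodType R) (U : set V) : Prop :=
  forall a b, U a -> U b -> forall t : R, 0 <= t <= 1 ->
    U (t *: a + (1 - t) *: b).

End Defs.

Section Jac.
Variables (R : realType) (u s : nat).
Local Notation V := ('cV[R]_u * 'cV[R]_s)%type.

Definition Dxx (f : V -> V) (z : V) : 'M[R]_(u, u) :=
  \matrix_(i, j) ('d f z (delta_mx j 0, 0)).1 i 0.
Definition Dxy (f : V -> V) (z : V) : 'M[R]_(u, s) :=
  \matrix_(i, j) ('d f z (0, delta_mx j 0)).1 i 0.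
Definition Dyx (f : V -> V) (z : V) : 'M[R]_(s, u) :=
  \matrix_(i, j) ('d f z (delta_mx j 0, 0)).2 i 0.
Definition Dyy (f : V -> V) (z : V) : 'M[R]_(s, s) :=
  \matrix_(i, j) ('d f z (0, delta_mx j 0)).2 i 0.

Definition C1_on (f : V -> V) (U : set V) : Prop :=
  (forall z, U z -> differentiable f z) /\
  (forall v z, U z -> {for z, continuous (fun w => 'd f w v)}).

Definition Js (M : R) : set V := [set z | enorm z.1 <= M * enorm z.2].
End Jac.

(* Main.v *)
Require Import Defs.
From HB Require Import structures.
From mathcomp Require Import all_boot all_order all_algebra.
From mathcomp Require Import all_classical all_reals all_analysis.
From mathcomp Require Import ring lra.
Set Implicit Arguments. Unset Strict Implicit. Unset Printing Implicit Defensive.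
Import Order.TTheory GRing.Theory Num.Theory.
Import numFieldNormedType.Exports.
Local Open Scope classical_set_scope.
Local Open Scope ring_scope.


Section Alg.
Variable R : realType.

Definition dot n (a b : 'cV[R]_n) : R := \sum_i a i 0 * b i 0.

Lemma dot_ge0 n (a : 'cV[R]_n) : 0 <= dot a a.
Proof. by apply: sumr_ge0 => i _; rewrite -expr2 sqr_ge0. Qed.

Lemma enorm_sq n (a : 'cV[R]_n) : enorm a ^+ 2 = dot a a.
Proof.
rewrite /enorm sqr_sqrtr //; try by apply: sumr_ge0 => i _; exact: sqr_ge0.
Qed.

Lemma enorm_ge0 n (a : 'cV[R]_n) : 0 <= enorm a.
Proof. exact: sqrtr_ge0. Qed.

Lemma enormE n (a : 'cV[R]_n) : enorm a = Num.sqrt (dot a a).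
Proof. by rewrite /enorm; congr Num.sqrt; apply: eq_bigr => i _; rewrite expr2. Qed.

Lemma dotC n (a b : 'cV[R]_n) : dot a b = dot b a.
Proof. by apply: eq_bigr => i _; rewrite mulrC. Qed.

Lemma dotDr n (a b c : 'cV[R]_n) : dot a (b + c) = dot a b + dot a c.
Proof. by rewrite /dot -big_split; apply: eq_bigr => i _; rewrite !mxE mulrDr. Qed.

Lemma dotZr n (a b : 'cV[R]_n) k : dot a (k *: b) = k * dot a b.
Proof. by rewrite /dot mulr_sumr; apply: eq_bigr => i _; rewrite !mxE mulrCA. Qed.

Lemma dotNr n (a b : 'cV[R]_n) : dot a (- b) = - dot a b.
Proof. by rewrite -scaleN1r dotZr mulN1r. Qed.

Lemma dotDl n (a b c : 'cV[R]_n) : dot (b + c) a = dot b a + dot c a.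
Proof. by rewrite dotC dotDr !(dotC a). Qed.

Lemma dotZl n (a b : 'cV[R]_n) k : dot (k *: b) a = k * dot b a.
Proof. by rewrite dotC dotZr dotC. Qed.

Lemma dotNl n (a b : 'cV[R]_n) : dot (- b) a = - dot b a.
Proof. by rewrite dotC dotNr dotC. Qed.

Lemma dot0r n (a : 'cV[R]_n) : dot a 0 = 0.
Proof. by rewrite /dot big1 // => i _; rewrite mxE mulr0. Qed.

Lemma dot_eq0 n (a : 'cV[R]_n) : dot a a = 0 -> a = 0.
Proof.
move=> /eqP; rewrite psumr_eq0; last by move=> i _; rewrite -expr2 sqr_ge0.
move=> /allP H; apply/matrixP => i j; rewrite (ord1 j) mxE.
have /H : i \in index_enum 'I_n by rewrite mem_index_enum.
by rewrite /= -expr2 sqrf_eq0 => /eqP.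
Qed.

Lemma CS2 n (a b : 'cV[R]_n) : dot a b ^+ 2 <= dot a a * dot b b.
Proof.
have H t : 0 <= dot a a - 2 * t * dot a b + t ^+ 2 * dot b b.
  have := dot_ge0 (a - t *: b).
  rewrite dotDl !dotDr !dotNr !dotNl !dotZr !dotZl (dotC b a).
  move=> h; apply: (le_trans h); rewrite le_eqVlt; apply/orP; left; apply/eqP; ring.
have [bb0|bbn0] := eqVneq (dot b b) 0.
  by rewrite bb0 (dot_eq0 bb0) dot0r mulr0 expr0n.
have bbp : 0 < dot b b by rewrite lt_neqAle eq_sym bbn0 dot_ge0.
have := H (dot a b / dot b b).
have -> : dot a a - 2 * (dot a b / dot b b) * dot a b + (dot a b / dot b b) ^+ 2 * dot b b
   = (dot a a * dot b b - dot a b ^+ 2) / dot b b.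
  by field; rewrite bbn0.
rewrite pmulr_lge0 ?invr_gt0 // subr_ge0 => ->. done.
Qed.

Lemma CS n (a b : 'cV[R]_n) : dot a b <= enorm a * enorm b.
Proof.
apply: le_trans (ler_norm _) _.
rewrite -sqrtr_sqr !enormE -sqrtrM ?dot_ge0 // ler_sqrt ?mulr_ge0 ?dot_ge0 //.
exact: CS2.
Qed.

Lemma enormD n (a b : 'cV[R]_n) : enorm (a + b) <= enorm a + enorm b.
Proof.
rewrite -[enorm a + _]ger0_norm ?addr_ge0 ?enorm_ge0 // -sqrtr_sqr.
rewrite enormE ler_sqrt ?sqr_ge0 // sqrrD !enorm_sq dotDl !dotDr (dotC b a).
have := CS a b => h.
rewrite mulr2n; lra.
Qed.

Lemma enormZ n (a : 'cV[R]_n) k : enorm (k *: a) = `|k| * enorm a.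
Proof.
by rewrite !enormE dotZl dotZr mulrA -expr2 sqrtrM ?sqr_ge0 // sqrtr_sqr.
Qed.

Lemma enormN n (a : 'cV[R]_n) : enorm (- a) = enorm a.
Proof. by rewrite -scaleN1r enormZ normrN normr1 mul1r. Qed.

Lemma enorm0 n : enorm (0 : 'cV[R]_n) = 0.
Proof. by rewrite enormE dot0r sqrtr0. Qed.

Lemma enorm_eq0 n (a : 'cV[R]_n) : enorm a = 0 -> a = 0.
Proof.
move=> h; apply: dot_eq0; rewrite -enorm_sq h; exact: expr0n.
Qed.

Lemma opnorm_ub p q (A : 'M[R]_(p, q)) :
  has_ubound [set enorm (A *m v) | v in [set v : 'cV[R]_q | enorm v <= 1]].
Proof.
exists (Num.sqrt (\sum_i dot (\col_j A i j) (\col_j A i j))).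
move=> _ [v /= v1 <-]; rewrite enormE ler_sqrt; last first.
  by apply: sumr_ge0 => i _; exact: dot_ge0.
rewrite {1}/dot; apply: ler_sum => i _.
have -> : (A *m v) i 0 = dot (\col_j A i j) v.
  by rewrite mxE; apply: eq_bigr => j _; rewrite mxE.
rewrite -expr2; apply: le_trans (CS2 _ _) _.
apply: ler_piMr; first exact: dot_ge0.
by rewrite -enorm_sq expr_le1 ?enorm_ge0.
Qed.

Lemma opnorm_ge0 p q (A : 'M[R]_(p, q)) : 0 <= opnorm A.
Proof.
apply: (ub_le_sup (opnorm_ub A)); exists 0 => /=.
  by rewrite enorm0 ler01.
by rewrite mulmx0 enorm0.
Qed.

Lemma opnorm_bound p q (A : 'M[R]_(p, q)) v :
  enorm (A *m v) <= opnorm A * enorm v.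
Proof.
have [v0|vn0] := eqVneq (enorm v) 0.
  by rewrite v0 (enorm_eq0 v0) mulmx0 enorm0 mulr0.
have vp : 0 < enorm v by rewrite lt_neqAle eq_sym vn0 enorm_ge0.
have h : enorm (A *m ((enorm v)^-1 *: v)) <= opnorm A.
  apply: (ub_le_sup (opnorm_ub A)); exists ((enorm v)^-1 *: v) => //=.
  by rewrite enormZ ger0_norm ?invr_ge0 ?enorm_ge0 // mulVf.
move: h; rewrite -scalemxAr enormZ ger0_norm ?invr_ge0 ?enorm_ge0 // => h.
by rewrite -ler_pdivrMr // mulrC.
Qed.

End Alg.


Section Cont.
Variable R : realType.

Lemma cont_sum (T : topologicalType) n (F : 'I_n -> T -> R) x :
  (forall i, {for x, continuous (F i)}) ->
  {for x, continuous (fun t => \sum_i F i t)}.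
Proof.
elim: n F => [|n IH] F H.
  rewrite (_ : (fun t => _) = cst 0); first exact: cst_continuous.
  by apply/funext => t; rewrite big_ord0.
rewrite (_ : (fun t => _) = (fun t => \sum_(i < n) F (widen_ord (leqnSn n) i) t)
   + F ord_max); last by apply/funext => t; rewrite big_ord_recr.
apply: continuousD; last exact: H.
exact: IH.
Qed.

Variables u s : nat.
Local Notation V := ('cV[R]_u * 'cV[R]_s)%type.

Lemma cont_c1 i (x : V) : {for x, continuous (fun v : V => v.1 i 0)}.
Proof.
apply: (@continuous_comp _ _ _ fst (fun m : 'cV[R]_u => m i 0)).
  exact: cvg_fst.
exact: coord_continuous.
Qed.

Lemma cont_c2 i (x : V) : {for x, continuous (fun v : V => v.2 i 0)}.
Proof.
apply: (@continuous_comp _ _ _ snd (fun m : 'cV[R]_s => m i 0)).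
  exact: cvg_snd.
exact: coord_continuous.
Qed.

End Cont.

Section Lin.
Variables (R : realType) (u s : nat).
Local Notation V := ('cV[R]_u * 'cV[R]_s)%type.

Definition Lf (c : 'cV[R]_u) (e : 'cV[R]_s) (v : V) : R := dot c v.1 + dot e v.2.

Lemma Lf_lin c e : linear (Lf c e).
Proof.
move=> a v w; rewrite /Lf /= !dotDr !dotZr.
rewrite [in RHS]/GRing.scale /=; ring.
Qed.

Definition LfL c e : {linear V -> R} :=
  HB.pack (Lf c e) (GRing.isLinear.Build _ _ _ _ _ (Lf_lin c e)).

Lemma Lf_cont c e : continuous (Lf c e).
Proof.
move=> x.
rewrite (_ : Lf c e = (fun v : V => \sum_i (cst (c i 0) \* (fun w : V => w.1 i 0)) v)
   + (fun v : V => \sum_i (cst (e i 0) \* (fun w : V => w.2 i 0)) v)); last first.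
  by apply/funext => v.
apply: continuousD.
  apply: cont_sum => i; apply: continuousM; first exact: cst_continuous.
  exact: cont_c1.
apply: cont_sum => i; apply: continuousM; first exact: cst_continuous.
exact: cont_c2.
Qed.

Lemma der_line (f : V -> V) (z : V) t (L : {linear V -> R}) :
  continuous L -> differentiable f (t *: z) ->
  is_derive t 1 (fun r => L (f (r *: z))) (L ('d f (t *: z) z)).
Proof.
move=> cL df.
have dg : differentiable (fun r : R => r *: z) t by exact: ex_diff.
have dL : forall w, differentiable L w by move=> w; exact: linear_differentiable.
have dfg : differentiable (f \o (fun r : R => r *: z)) t.
  exact: differentiable_comp.
have dh : differentiable (L \o (f \o (fun r : R => r *: z))) t.
  apply: differentiable_comp; last exact: dL.
  exact: dfg.
have -> : L ('d f (t *: z) z) = 'D_1 (L \o (f \o (fun r : R => r *: z))) t.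
  rewrite (deriveE _ dh) (diff_comp dfg (dL _)) /= (diff_comp dg df) /= diff_lin //.
  by rewrite (@diff_val _ _ _ _ _ _ _ (is_diff_scalel t z)) /= scale1r.
have dd : derivable (L \o (f \o (fun r : R => r *: z))) t 1.
  exact: diff_derivable.
exact: (derivableP dd).
Qed.

End Lin.

Section Decomp.
Variables (R : realType) (u s : nat).
Local Notation V := ('cV[R]_u * 'cV[R]_s)%type.

Lemma fst_sum n (F : 'I_n -> V) : (\sum_i F i).1 = \sum_i (F i).1.
Proof. exact: (big_morph fst (fun _ _ => erefl) erefl). Qed.

Lemma snd_sum n (F : 'I_n -> V) : (\sum_i F i).2 = \sum_i (F i).2.
Proof. exact: (big_morph snd (fun _ _ => erefl) erefl). Qed.

Lemma col_delta n (x : 'cV[R]_n) : x = \sum_j x j 0 *: delta_mx j 0.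
Proof.
rewrite {1}[x]matrix_sum_delta; apply: eq_bigr => j _.
by rewrite big_ord1.
Qed.

Lemma lin_e1 (D : {linear V -> V}) (x : 'cV[R]_u) :
  D (x, 0) = \sum_j x j 0 *: D (delta_mx j 0, 0).
Proof.
have -> : ((x, 0) : V) = \sum_j x j 0 *: ((delta_mx j 0, 0) : V).
  have E1 : (\sum_j x j 0 *: ((delta_mx j 0, 0) : V)).1 = x.
    by rewrite fst_sum [RHS]col_delta.
  have E2 : (\sum_j x j 0 *: ((delta_mx j 0, 0) : V)).2 = 0.
    by rewrite snd_sum big1 // => j _ /=; rewrite scaler0.
  by case: (\sum_j _) E1 E2 => a b /= -> ->.
by rewrite linear_sum; apply: eq_bigr => j _; rewrite linearZ.
Qed.

Lemma lin_e2 (D : {linear V -> V}) (y : 'cV[R]_s) :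
  D (0, y) = \sum_j y j 0 *: D (0, delta_mx j 0).
Proof.
have -> : ((0, y) : V) = \sum_j y j 0 *: ((0, delta_mx j 0) : V).
  have E1 : (\sum_j y j 0 *: ((0, delta_mx j 0) : V)).2 = y.
    by rewrite snd_sum [RHS]col_delta.
  have E2 : (\sum_j y j 0 *: ((0, delta_mx j 0) : V)).1 = 0.
    by rewrite fst_sum big1 // => j _ /=; rewrite scaler0.
  by case: (\sum_j _) E1 E2 => a b /= -> ->.
by rewrite linear_sum; apply: eq_bigr => j _; rewrite linearZ.
Qed.

Lemma decomp (f : V -> V) (w z : V) :
  ('d f w z).1 = Dxx f w *m z.1 + Dxy f w *m z.2 /\
  ('d f w z).2 = Dyx f w *m z.1 + Dyy f w *m z.2.
Proof.
have -> : z = ((z.1, 0) : V) + (0, z.2).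
  by case: z => a b /=; change ((a, b) = (a + 0, 0 + b)); rewrite addr0 add0r.
rewrite linearD lin_e1 lin_e2 /=.
rewrite addr0 add0r; split; apply/matrixP => i k; rewrite (ord1 k) !mxE;
  congr (_ + _); rewrite ?fst_sum ?snd_sum summxE; apply: eq_bigr => j _;
  by rewrite !mxE mulrC.
Qed.

End Decomp.


Section Int.
Variable R : realType.
Local Notation mu := (@lebesgue_measure R).

Definition c01 (g : R -> R) := forall t, 0 <= t <= 1 -> {for t, continuous g}.

Lemma c01_within g : c01 g -> {within `[0, 1], continuous g}.
Proof.
move=> h; apply: continuous_subspace_itv => t; rewrite in_itv /= => /h.
done.
Qed.

Lemma c01_int g : c01 g -> mu.-integrable `[0, 1] (EFin \o g).
Proof.
move=> h; apply: continuous_compact_integrable; first exact: segment_compact.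
exact: c01_within.
Qed.

Lemma mu01 : fine (mu `[0, 1]%classic) = 1.
Proof. by rewrite lebesgue_measure_itv /= lte_fin ltr01 /= subr0. Qed.

Lemma c01_sum n (g : 'I_n -> R -> R) : (forall i, c01 (g i)) ->
  c01 (fun t => \sum_i g i t).
Proof. by move=> h t ht; apply: cont_sum => i; exact: h. Qed.

Lemma c01_scale (c : R) g : c01 g -> c01 (fun t => c * g t).
Proof.
move=> h t ht; apply: (@continuousM _ _ (cst c) g); first exact: cst_continuous.
exact: h.
Qed.

Lemma int_sum n (c : 'I_n -> R) (g : 'I_n -> R -> R) : (forall i, c01 (g i)) ->
  \int[mu]_(t in `[0, 1]) (\sum_i c i * g i t) = \sum_i c i * \int[mu]_(t in `[0, 1]) g i t.
Proof.
elim: n c g => [|n IH] c g h.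
  rewrite big_ord0.
  have -> : (fun t => \sum_(i < 0) c i * g i t) = (fun=> 0).
    by apply/funext => t; rewrite big_ord0.
  by rewrite Rintegral_cst // mul0r.
have -> : (fun t => \sum_(i < n.+1) c i * g i t) = (fun t =>
   \sum_(i < n) c (widen_ord (leqnSn n) i) * g (widen_ord (leqnSn n) i) t
   + c ord_max * g ord_max t).
  by apply/funext => t; rewrite big_ord_recr.
rewrite RintegralD //; last first.
  - by apply: c01_int; apply: c01_scale.
  - apply: c01_int; apply: c01_sum => i; apply: c01_scale; exact: h.
rewrite big_ord_recr /= IH; last by move=> i; exact: h.
by rewrite RintegralZl //; apply: c01_int.
Qed.

Lemma int_le g K : c01 g -> (forall t, 0 <= t <= 1 -> g t <= K) ->
  \int[mu]_(t in `[0, 1]) g t <= K.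
Proof.
move=> cg h.
have E : \int[mu]_(t in `[0, 1]) K = K by rewrite Rintegral_cst // mu01 mulr1.
rewrite -[leRHS]E; apply: le_Rintegral => //; first [exact: c01_int | (apply: c01_int => t _; exact: cst_continuous) | (by move=> t; rewrite /= in_itv /= => /h)].
Qed.

Lemma int_ge g K : c01 g -> (forall t, 0 <= t <= 1 -> K <= g t) ->
  K <= \int[mu]_(t in `[0, 1]) g t.
Proof.
move=> cg h.
have E : \int[mu]_(t in `[0, 1]) K = K by rewrite Rintegral_cst // mu01 mulr1.
rewrite -[leLHS]E; apply: le_Rintegral => //; first [exact: c01_int | (apply: c01_int => t _; exact: cst_continuous) | (by move=> t; rewrite /= in_itv /= => /h)].
Qed.

Lemma ftc01 (F g : R -> R) : (forall t : R, 0 <= t <= 1 -> is_derive t 1 F (g t)) ->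
  c01 g -> \int[mu]_(t in `[0, 1]) g t = F 1 - F 0.
Proof.
move=> dF cg.
have cF t : 0 <= t <= 1 -> {for t, continuous F}.
  move=> /dF h; apply: differentiable_continuous.
  by apply/derivable1_diffP; exact: ex_derive.
have := @continuous_FTC2 R g F 0 1 ltr01 (c01_within cg).
rewrite /Rintegral => ->.
- by [].
- split.
  + move=> t; rewrite in_itv /= => /andP[h0 h1].
    by have := dF t; rewrite (ltW h0) (ltW h1) => /(_ isT) H; exact: ex_derive.
  + by apply: cvg_at_right_filter; apply: cF; rewrite lexx ler01.
  + by apply: cvg_at_left_filter; apply: cF; rewrite lexx ler01.
- move=> t; rewrite in_itv /= => /andP[h0 h1].
  have := dF t; rewrite (ltW h0) (ltW h1) => /(_ isT) H.
  by rewrite derive1E derive_val.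
Qed.

End Int.


Section Aux.
Variable R : realType.

Lemma dot0l n (a : 'cV[R]_n) : dot 0 a = 0.
Proof. by rewrite dotC dot0r. Qed.

Lemma dot_delta n i (v : 'cV[R]_n) : dot (delta_mx i 0) v = v i 0.
Proof.
rewrite /dot (bigD1 i) //= big1 => [|j /negbTE ji]; rewrite !mxE.
  by rewrite !eqxx mul1r addr0.
by rewrite ji mul0r.
Qed.

Lemma enorm_cont n : continuous (@enorm R n).
Proof.
move=> v; apply: (@continuous_comp _ _ _ (fun w : 'cV[R]_n => \sum_i w i 0 ^+ 2)
   Num.sqrt); last exact: sqrt_continuous.
rewrite (_ : (fun w : 'cV[R]_n => \sum_i w i 0 ^+ 2) =
   (fun w => \sum_i ((fun m : 'cV[R]_n => m i 0) \* (fun m : 'cV[R]_n => m i 0)) w));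
  last by apply/funext => w; apply: eq_bigr => i _; rewrite expr2.
apply: cont_sum => i; apply: continuousM; exact: coord_continuous.
Qed.

Lemma sq_le (a K : R) : 0 <= a -> 0 <= K -> a ^+ 2 <= a * K -> a <= K.
Proof. move=> a0 K0 h; nra. Qed.

Lemma ineq_y (M a b ex ey mu : R) : 0 < M -> 0 <= a -> 0 <= b -> 0 <= ex ->
  0 <= ey -> M * ey <= ex -> b + M * a <= mu -> a * ex + b * ey <= mu / M * ex.
Proof.
move=> M0 a0 b0 ex0 ey0 h1 h2; rewrite mulrAC ler_pdivlMr //.
nra.
Qed.

Lemma eint_ge (E : \bar R) h : c01 h ->
  (forall t, 0 <= t <= 1 -> (E <= (h t)%:E)%E) ->
  (E <= (\int[lebesgue_measure]_(t in `[0, 1]) h t)%:E)%E.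
Proof.
move=> ch hb; case: E hb => [e| |] hb.
- by rewrite lee_fin; apply: int_ge => // t /hb; rewrite lee_fin.
- by have := hb 0; rewrite lexx ler01 leye_eq => /(_ isT).
- exact: leNye.
Qed.

Lemma eint_le (E : \bar R) h : c01 h ->
  (forall t, 0 <= t <= 1 -> ((h t)%:E <= E)%E) ->
  ((\int[lebesgue_measure]_(t in `[0, 1]) h t)%:E <= E)%E.
Proof.
move=> ch hb; case: E hb => [e| |] hb.
- by rewrite lee_fin; apply: int_le => // t /hb; rewrite lee_fin.
- exact: leey.
- by have := hb 0; rewrite lexx ler01 leeNy_eq => /(_ isT).
Qed.

Variables u s : nat.
Local Notation V := ('cV[R]_u * 'cV[R]_s)%type.

Lemma clos_sub (M : R) :
  closure (~` Js M) `<=` [set w : V | M * enorm w.2 <= enorm w.1].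
Proof.
have cl : closed [set w : V | M * enorm w.2 <= enorm w.1].
  rewrite (_ : [set w : V | M * enorm w.2 <= enorm w.1] =
     (fun w : V => enorm w.1 - M * enorm w.2) @^-1` [set r | 0 <= r]).
    have : continuous (fun w : V => enorm w.1 - M * enorm w.2).
      rewrite (_ : (fun w : V => enorm w.1 - M * enorm w.2) =
        (fun w : V => enorm w.1) - (fun w : V => M * enorm w.2)) //.
      move=> w; apply: continuousB.
        apply: (@continuous_comp _ _ _ fst (@enorm R u)); first exact: cvg_fst.
        exact: enorm_cont.
      apply: (@continuousM _ _ (cst M) (fun w : V => enorm w.2)).
        exact: cst_continuous.
      apply: (@continuous_comp _ _ _ snd (@enorm R s)); first exact: cvg_snd.
      exact: enorm_cont.
    by move/continuous_closedP; apply; exact: closed_ge.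
  by apply/seteqP; split => w /=; rewrite subr_ge0.
have sub : ~` Js M `<=` [set w : V | M * enorm w.2 <= enorm w.1].
  move=> w /= h.
  by rewrite leNgt; apply/negP => h'; apply: h; rewrite /Js /= ltW.
apply: (subset_trans (closureS sub)).
by move/closure_id: cl => <-.
Qed.

Lemma c01_path (f : V -> V) (z : V) (L : V -> R) v : continuous L ->
  (forall t, 0 <= t <= 1 -> {for t *: z, continuous (fun w => 'd f w v)}) ->
  c01 (fun t => L ('d f (t *: z) v)).
Proof.
move=> cL h t ht.
apply: (@continuous_comp _ _ _ (fun r : R => r *: z) (fun w => L ('d f w v))).
  exact: scalel_continuous.
apply: (continuous_comp (h t ht)); exact: cL.
Qed.

End Aux.

Unset Implicit Arguments.

Theorem theorem4p3 (R : realType) (u s : nat)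
  (U : set ('cV[R]_u * 'cV[R]_s)) (f : 'cV[R]_u * 'cV[R]_s -> 'cV[R]_u * 'cV[R]_s)
  (M xi mu : R) :
  open U -> U 0 -> convex_set_ U ->
  C1_on f U -> f 0 = 0 ->
  0 < M ->
  (m_set (interval_hull (Dxx f) U)
     - (M^-1)%:E * ereal_sup [set (opnorm (Dxy f z))%:E | z in U] >= xi%:E)%E ->
  (ereal_sup [set (opnorm (Dyy f z) + M * opnorm (Dyx f z))%:E | z in U]
     <= mu%:E)%E ->
  1 < xi / mu ->
  f @` (closure (~` Js M) `&` U) `<=` (~` Js M) `|` [set 0].
Proof.
move=> oU U0 cU [dfU cfU] f0 M0 hxi hmu hr.
move=> _ [z [zcl zU] <-].
have hxy : M * enorm z.2 <= enorm z.1 := clos_sub zcl.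
have ex0 := enorm_ge0 z.1; have ey0 := enorm_ge0 z.2.
have [exz|exnz] := eqVneq (enorm z.1) 0.
  right.
  have ey : enorm z.2 = 0.
    apply/eqP; rewrite eq_le ey0 andbT.
    have h : M * enorm z.2 <= 0 by rewrite -exz.
    by rewrite pmulr_rle0 in h.
  have -> : z = 0.
    move: (enorm_eq0 exz) (enorm_eq0 ey).
    by case: z {zcl zU hxy ex0 ey0 exz ey} => a b /= -> ->.
  by rewrite /= f0.
left => hJ.
have exp : 0 < enorm z.1 by rewrite lt_neqAle eq_sym exnz ex0.
have path t : 0 <= t <= 1 -> U (t *: z).
  by move=> ht; have := cU z 0 zU U0 t ht; rewrite scaler0 addr0.
have mufacts w : U w -> opnorm (Dyy f w) + M * opnorm (Dyx f w) <= mu.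
  move=> Uw; rewrite -lee_fin; apply: le_trans hmu; apply: ereal_sup_ubound.
  by exists w.
have mu0 : 0 <= mu.
  apply: le_trans (mufacts 0 U0).
  by rewrite addr_ge0 ?mulr_ge0 ?opnorm_ge0 // ltW.
have mup : 0 < mu.
  rewrite lt_neqAle mu0 andbT; apply/eqP => mu00; move: hr.
  by rewrite -mu00 invr0 mulr0 ltr10.
have ximu : mu < xi by move: hr; rewrite ltr_pdivlMr // mul1r.
have [s0 [s0p [sb sm]]] : exists s0, 0 <= s0 /\ (forall w, U w -> opnorm (Dxy f w) <= s0) /\
    ((xi + s0 / M)%:E <= m_set (interval_hull (Dxx f) U))%E.
  move: hxi.
  set S := ereal_sup _.
  have Sge w : U w -> ((opnorm (Dxy f w))%:E <= S)%E.
    by move=> Uw; apply: ereal_sup_ubound; exists w.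
  case hS : S => [s1| |] hxi'.
  - exists s1; split.
      by have := Sge 0 U0; rewrite hS lee_fin; apply: le_trans; exact: opnorm_ge0.
    split; first by move=> w Uw; have := Sge w Uw; rewrite hS lee_fin.
    move: hxi'; case: (m_set _) => [m| |] //=.
    + move=> h; rewrite -EFinD !lee_fin in h; rewrite lee_fin.
      rewrite [M^-1 * s1]mulrC in h; lra.
    + by move=> _; rewrite leey.
  - move: hxi'; rewrite mulry gtr0_sg ?invr_gt0 // mul1e /= addeNy leeNy_eq.
    by [].
  - by have := Sge 0 U0; rewrite hS leeNy_eq.
pose q := (f z).2.
have LfLE c e w : LfL c e w = Lf c e w by [].
have qb : M * enorm q <= mu * enorm z.1.
  have dq : dot q q <= enorm q * (mu / M * enorm z.1).
    have c1 : c01 (fun t => Lf (0 : 'cV[R]_u) q ('d f (t *: z) z)).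
      apply: c01_path; first exact: Lf_cont.
      by move=> t ht; exact: cfU _ _ (path t ht).
    have eq1 : \int[lebesgue_measure]_(t in `[0, 1]) Lf (0 : 'cV[R]_u) q ('d f (t *: z) z)
        = Lf (0 : 'cV[R]_u) q (f (1 *: z)) - Lf (0 : 'cV[R]_u) q (f (0 *: z)).
      apply: (@ftc01 R (fun r => LfL (0 : 'cV[R]_u) q (f (r *: z)))) => //.
      move=> t ht; apply: der_line; first exact: Lf_cont.
      exact: dfU _ (path t ht).
    rewrite scale1r scale0r f0 in eq1.
    have <- : Lf (0 : 'cV[R]_u) q (f z) - Lf (0 : 'cV[R]_u) q 0 = dot q q.
      by rewrite /Lf /= !dot0l !add0r dot0r subr0.
    rewrite -eq1.
    apply: int_le.
      apply: c01_path; first exact: Lf_cont.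
      by move=> t ht; exact: cfU _ _ (path t ht).
    move=> t ht; rewrite /Lf dot0l add0r.
    have [_ ->] := decomp f (t *: z) z.
    apply: le_trans (CS _ _) _; apply: ler_wpM2l; first exact: enorm_ge0.
    apply: le_trans (enormD _ _) _.
    apply: le_trans (lerD (opnorm_bound _ _) (opnorm_bound _ _)) _.
    apply: ineq_y => //; try exact: opnorm_ge0.
    exact: mufacts (path t ht).
  have : enorm q <= mu / M * enorm z.1.
    apply: sq_le; first exact: enorm_ge0.
      by rewrite mulr_ge0 // divr_ge0 // ltW.
    by rewrite enorm_sq.
  rewrite mulrAC ler_pdivlMr // => h.
  by rewrite mulrC.
pose p := (f z).1.
pose a (i j : 'I_u) (t : R) := Dxx f (t *: z) i j.
pose g (i : 'I_u) (t : R) := (Dxy f (t *: z) *m z.2) i 0.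
have ca i j : c01 (a i j).
  rewrite (_ : a i j = fun t =>
     Lf (delta_mx i 0 : 'cV[R]_u) (0 : 'cV[R]_s) ('d f (t *: z) (delta_mx j 0, 0))).
    apply: c01_path; first exact: Lf_cont.
    by move=> t ht; exact: cfU _ _ (path t ht).
  by apply/funext => t; rewrite /a /Lf dot0l addr0 dot_delta mxE.
have cg i : c01 (g i).
  rewrite (_ : g i = fun t =>
     Lf (delta_mx i 0 : 'cV[R]_u) (0 : 'cV[R]_s) ('d f (t *: z) (0, z.2))).
    apply: c01_path; first exact: Lf_cont.
    by move=> t ht; exact: cfU _ _ (path t ht).
  apply/funext => t; rewrite /g /Lf dot0l addr0 dot_delta.
  by have [-> _] := decomp f (t *: z) (0, z.2); rewrite /= mulmx0 add0r.
pose A := \matrix_(i, j) \int[lebesgue_measure]_(t in `[0, 1]) a i j t.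
pose bv := \col_i \int[lebesgue_measure]_(t in `[0, 1]) g i t.
have pE : p = A *m z.1 + bv.
  apply/matrixP => i k; rewrite (ord1 k) !mxE.
  have c1 : c01 (fun t => Lf (delta_mx i 0 : 'cV[R]_u) (0 : 'cV[R]_s) ('d f (t *: z) z)).
    apply: c01_path; first exact: Lf_cont.
    by move=> t ht; exact: cfU _ _ (path t ht).
  have eq1 : \int[lebesgue_measure]_(t in `[0, 1])
        Lf (delta_mx i 0 : 'cV[R]_u) (0 : 'cV[R]_s) ('d f (t *: z) z)
      = Lf (delta_mx i 0 : 'cV[R]_u) (0 : 'cV[R]_s) (f (1 *: z))
        - Lf (delta_mx i 0 : 'cV[R]_u) (0 : 'cV[R]_s) (f (0 *: z)).
    apply: (@ftc01 R (fun r => LfL (delta_mx i 0 : 'cV[R]_u) (0 : 'cV[R]_s) (f (r *: z)))) => //.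
    move=> t ht; apply: der_line; first exact: Lf_cont.
    exact: dfU _ (path t ht).
  rewrite scale1r scale0r f0 /Lf !dot0l !addr0 !dot_delta mxE subr0 in eq1.
  rewrite /p -eq1.
  have -> : (fun t => dot (delta_mx i 0 : 'cV[R]_u) ('d f (t *: z) z).1
       + dot (0 : 'cV[R]_s) ('d f (t *: z) z).2) =
     (fun t => \sum_j z.1 j 0 * a i j t + g i t).
    apply/funext => t; rewrite dot0l addr0 dot_delta.
    have [-> _] := decomp f (t *: z) z.
    rewrite mxE; congr (_ + _).
    by rewrite mxE; apply: eq_bigr => j _; exact: mulrC.
  rewrite RintegralD //; last first.
  - exact: c01_int.
  - by apply: c01_int; apply: c01_sum => j; apply: c01_scale.
  rewrite int_sum //; congr (_ + _); apply: eq_bigr => j _.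
  by rewrite !mxE mulrC.
have hA : interval_hull (Dxx f) U A.
  move=> i j; rewrite mxE; split.
    apply: eint_ge => // t ht; apply: ereal_inf_lbound.
    by exists (t *: z) => //; exact: path.
  apply: eint_le => // t ht; apply: ereal_sup_ubound.
  by exists (t *: z) => //; exact: path.
have bvb : enorm bv <= s0 * enorm z.2.
  apply: sq_le; first exact: enorm_ge0.
    by rewrite mulr_ge0 // enorm_ge0.
  rewrite enorm_sq.
  have -> : dot bv bv = \int[lebesgue_measure]_(t in `[0, 1]) \sum_i bv i 0 * g i t.
    rewrite int_sum //; apply: eq_bigr => i _.
    by rewrite [X in _ * X]mxE.
  apply: int_le.
    by apply: c01_sum => i; apply: c01_scale.
  move=> t ht.
  change (dot bv (Dxy f (t *: z) *m z.2) <= enorm bv * (s0 * enorm z.2)).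
  apply: le_trans (CS _ _) _; apply: ler_wpM2l; first exact: enorm_ge0.
  apply: le_trans (opnorm_bound _ _) _; apply: ler_wpM2r; first exact: enorm_ge0.
  exact: sb (path t ht).
have mA : (m_set (interval_hull (Dxx f) U) <= m_mx A)%E.
  by apply: ereal_inf_lbound; exists A.
pose r := xi + s0 / M - (xi - mu) / 2.
have : (r%:E < m_mx A)%E.
  apply: lt_le_trans (le_trans sm mA); rewrite lte_fin /r; lra.
move/ereal_sup_gt => [_ [c hc <-]]; rewrite lte_fin => rc.
have hAx := hc z.1.
have Ax : enorm (A *m z.1) <= enorm p + enorm bv.
  have -> : A *m z.1 = p - bv by rewrite pE addrK.
  by apply: le_trans (enormD _ _) _; rewrite enormN.
have h1 : s0 * enorm z.2 <= s0 / M * enorm z.1.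
  rewrite mulrAC ler_pdivlMr //; nra.
have h2 : r * enorm z.1 < c * enorm z.1 by rewrite ltr_pM2r.
have h3 : r * enorm z.1 = xi * enorm z.1 + s0 / M * enorm z.1
   - (xi - mu) / 2 * enorm z.1 by rewrite /r; ring.
have h4 : 0 < (xi - mu) * enorm z.1 by rewrite mulr_gt0 // subr_gt0.
have hJ' : enorm p <= M * enorm q := hJ.
have hcA : c * enorm z.1 <= mu * enorm z.1 + s0 / M * enorm z.1.
  apply: le_trans hAx _; apply: le_trans Ax _; apply: lerD.
    exact: le_trans hJ' qb.
  exact: le_trans bvb h1.
move: (lt_le_trans h2 hcA); rewrite h3 => h5.
move: h4; rewrite mulrBl => h4.
move: h4 h5; clear; move=> h4 h5; lra.
Qed.
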